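(* Let $S$ be a semigroup of transformations of a finite set $\Omega$, and suppose $S$ contains a permutation group $G$ that is primitive on $\Omega$. Suppose the minimum rank of an element of $S$ is $r$, where $r>1$. Then $S$ contains no element of rank $r+1$.
   Context: The rank of a transformation $h$ is $|\Omega h|$. A permutation group is primitive if it is transitive and preserves no equivalence relation other than equality and the universal relation. *)

(* Defs.v *)
From mathcomp Require Import all_boot all_fingroup all_solvable.
Set Implicit Arguments. Unset Strict Implicit. Unset Printing Implicit Defensive.

Definition tcomp (T : finType) (f g : {ffun T -> T}) : {ffun T -> T} :=
  [ffun x => g (f x)].

Definition trank (T : finType) (h : {ffun T -> T}) : nat := #|h @: [set: T]|.

Definition is_tsemigroup (T : finType) (S : {set {ffun T -> T}}) : Prop :=
  forall f g, f \in S -> g \in S -> tcomp f g \in S.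

Definition perm_tr (T : finType) (p : {perm T}) : {ffun T -> T} := [ffun x => p x].

(* Main.v *)
Require Import Defs.
From mathcomp Require Import all_boot all_fingroup all_solvable.
Set Implicit Arguments. Unset Strict Implicit. Unset Printing Implicit Defensive.
Section Prim.
Local Open Scope group_scope.

Lemma prim_lemma (T : finType) (G : {group {perm T}}) (R : T -> T -> bool) :
  [primitive G, on [set: T] | 'P] ->
  (forall x, R x x) -> (forall x y, R x y -> R y x) ->
  (forall x y z, R x y -> R y z -> R x z) ->
  (forall g y z, g \in G -> R y z -> R (g y) (g z)) ->
  forall b1 b2, b1 != b2 -> R b1 b2 -> forall x y, R x y.
Proof.
move=> prim Rr Rs Rt Ri b1 b2 nb Rb.
have trG : [transitive G, on [set: T] | 'P] by case/andP: prim.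
pose X := [set y | R b1 y].
have key : forall k, k \in G -> R b1 (k b1) -> k \in 'N_G(X | 'P).
  move=> k Gk Rk; rewrite inE Gk /=; apply/astabsP => y /=; rewrite !inE.
  apply/idP/idP => H.
  - have Gk' : k^-1 \in G by rewrite groupV.
    have := Ri _ _ _ Gk' Rk; have := Ri _ _ _ Gk' H; rewrite !permK => H1 H2.
    exact: Rt (Rs _ _ H2) H1.
  - exact: Rt Rk (Ri _ _ _ Gk H).
move: prim; rewrite (trans_prim_astab (x:=b1)) ?inE // => /maximal_eqP[_ /(_ 'N_G(X | 'P)%G)].
case.
- apply/subsetP => c; rewrite inE => /andP[Gc /astab1P /= cb].
  by apply: key => //; rewrite [c b1]cb.
- exact: subsetIl.
- move=> HC; exfalso.
  have [k Gk kb] := atransP2 trG (in_setT b1) (in_setT b2).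
  have kb' : b2 = k b1 by [].
  have : k \in 'N_G(X | 'P) by apply: key; rewrite // -kb'.
  rewrite HC inE => /andP[_ /astab1P /=]; rewrite /aperm -kb' => e.
  by rewrite e eqxx in nb.
- move=> HG x y.
  have hx : forall u, R b1 u.
    move=> u; have [k Gk ku0] := atransP2 trG (in_setT b1) (in_setT u).
    have ku : k b1 = u by rewrite ku0.
    have : k \in 'N_G(X | 'P) by rewrite HG.
    rewrite inE => /andP[_ /astabsP /(_ b1)]; rewrite /= /aperm !inE Rr ku => ->.
    done.
  exact: Rt (Rs _ _ (hx x)) (hx y).
Qed.
End Prim.

Lemma trank_comp (T : finType) (f g : {ffun T -> T}) :
  trank (tcomp f g) = #|g @: (f @: [set: T])|.
Proof.
rewrite /trank -imset_comp; apply: (congr1 (fun X : {set T} => #|X|)); apply/setP => y.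
by apply/imsetP/imsetP => -[x xT ->]; exists x => //=; rewrite ffunE.
Qed.

Lemma imset_tcomp (T : finType) (f g : {ffun T -> T}) (Y : {set T}) :
  tcomp f g @: Y = g @: (f @: Y).
Proof.
rewrite -imset_comp; apply/setP => y.
by apply/imsetP/imsetP => -[x xT ->]; exists x => //=; rewrite ffunE.
Qed.

Lemma ptr_imset (T : finType) (h : {ffun T -> T}) (g : {perm T}) (Y : {set T}) :
  h @: (perm_tr g @: Y) = (fun x => h (g x)) @: Y.
Proof. by rewrite -imset_comp; apply: eq_imset => x /=; rewrite ffunE. Qed.

Lemma ptr_card (T : finType) (g : {perm T}) (Y : {set T}) :
  #|perm_tr g @: Y| = #|Y|.
Proof. by apply: card_imset => x y; rewrite !ffunE; apply: perm_inj. Qed.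

Theorem corollary13 (T : finType) (S : {set {ffun T -> T}})
    (G : {group {perm T}}) (r : nat) :
  is_tsemigroup S ->
  (forall g, g \in G -> perm_tr g \in S) ->
  [primitive G, on [set: T] | 'P] ->
  (exists2 h, h \in S & trank h = r) ->
  (forall h, h \in S -> r <= trank h) ->
  1 < r ->
  ~ (exists2 h, h \in S & trank h = r.+1).
Proof.
move=> Ssg SG prim [h hS hr] hmin r1 [f fS fr].
have trG : [transitive G, on [set: T] | 'P] by case/andP: prim.
set A := h @: [set: T]; set B := f @: [set: T].
have cA : #|A| = r by [].
have cB : #|B| = r.+1 by [].
have K : forall g g', g \in G -> g' \in G ->
    {in f @: (perm_tr g' @: A) &, injective (fun x => h (g x))} /\
    #|f @: (perm_tr g' @: A)| = r.
  move=> g g' Gg Gg'.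
  have kS : tcomp (tcomp (tcomp (tcomp h (perm_tr g')) f) (perm_tr g)) h \in S.
    exact: (Ssg _ _ (Ssg _ _ (Ssg _ _ (Ssg _ _ hS (SG _ Gg')) fS) (SG _ Gg)) hS).
  have := hmin _ kS; rewrite /trank !imset_tcomp -/A ptr_imset.
  set X := f @: _ => hge.
  have h1 : #|X| <= r by rewrite -cA -(ptr_card g' A); apply: leq_imset_card.
  have h2 := leq_imset_card (fun x => h (g x)) X.
  have eX : #|X| = r by apply/eqP; rewrite eqn_leq h1 (leq_trans hge h2).
  split=> //; apply/imset_injP; rewrite eqn_leq leq_imset_card eX //.
have NI : forall g, g \in G -> exists c1, exists c2,
    [/\ c1 \in B, c2 \in B, c1 != c2 & h (g c1) = h (g c2)].
  move=> g Gg.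
  have : [exists c1, exists c2, [&& c1 \in B, c2 \in B, c1 != c2 & h (g c1) == h (g c2)]].
    apply: contraT => /existsPn H.
    have inj : {in B &, injective (fun x => h (g x))}.
      move=> x y xB yB e; apply/eqP; apply: contraT => nxy.
      by move: (H x) => /existsPn /(_ y); rewrite xB yB nxy /= e eqxx.
    have := card_in_imset inj; rewrite cB => e.
    have : #|(fun x => h (g x)) @: B| <= #|A|.
      apply: subset_leq_card; apply/subsetP => y /imsetP[x _ ->].
      by apply: imset_f.
    by rewrite e cA ltnn.
  move=> /existsP[c1 /existsP[c2 /and4P[? ? ? /eqP ?]]].
  by exists c1, c2.
have [a0 a0A] : exists a, a \in A.
  by apply/set0Pn; rewrite -card_gt0 cA; apply: ltnW.
have inX : forall b, b \in B -> exists2 g', g' \in G & b \in f @: (perm_tr g' @: A).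
  move=> b /imsetP[x _ ->].
  have [g' Gg' e] := atransP2 trG (in_setT a0) (in_setT x).
  exists g' => //; apply: imset_f; apply/imsetP; exists a0 => //.
  by rewrite ffunE e.
have M : forall b b', b \in B -> b' \in B -> b != b' -> h b = h b' ->
    forall g, g \in G -> forall c1 c2, c1 \in B -> c2 \in B -> c1 != c2 ->
    h (g c1) = h (g c2) -> c1 = b' \/ c2 = b'.
  move=> b b' bB b'B nbb' hbb g Gg c1 c2 c1B c2B nc hc.
  have [g' Gg' bX] := inX b bB.
  have [inj1 cX] := K 1%g g' (group1 G) Gg'.
  have [injg _] := K g g' Gg Gg'.
  set X := f @: _ in bX inj1 cX injg.
  have nb'X : b' \notin X.
    apply/negP => b'X; move: nbb'; rewrite (inj1 _ _ bX b'X) ?eqxx //.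
    by rewrite !perm1.
  have XB : X = B :\ b'.
    have cD : #|B :\ b'| = r by move: (cardsD1 b' B); rewrite b'B cB add1n => -[].
    apply/eqP; rewrite eqEcard cX cD leqnn andbT.
    apply/subsetP => x xX; rewrite !inE; apply/andP; split.
      by apply: contraNneq nb'X => <-.
    by move: xX => /imsetP[y _ ->]; apply: imset_f.
  case: (eqVneq c1 b') => [-> | n1]; first by left.
  case: (eqVneq c2 b') => [-> | n2]; first by right.
  have c1X : c1 \in X by rewrite XB !inE n1.
  have c2X : c2 \in X by rewrite XB !inE n2.
  by move: nc; rewrite (injg _ _ c1X c2X hc) eqxx.
have [b1 [b2 [b1B b2B nb hb]]] := NI 1%g (group1 G).
rewrite !perm1 in hb.
pose R := fun y z => [forall g in G, h (g y) == h (g z)].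
have Rb : R b1 b2.
  apply/forall_inP => g Gg; apply/eqP.
  have [c1 [c2 [c1B c2B nc hc]]] := NI g Gg.
  have e1 := M _ _ b1B b2B nb hb g Gg _ _ c1B c2B nc hc.
  have e2 := M _ _ b2B b1B (contra_neq (@esym _ _ _) nb) (esym hb)
     g Gg _ _ c1B c2B nc hc.
  case: e1 => E1; case: e2 => E2;
    first [by move: nb; rewrite -E1 -E2 eqxx | by rewrite -E1 -E2 hc | by rewrite -E1 -E2].
have all : forall x y, R x y.
  apply: (prim_lemma prim) nb Rb.
  - by move=> x; apply/forall_inP => g _.
  - by move=> x y /forall_inP H; apply/forall_inP => g Gg; rewrite eq_sym; apply: H.
  - move=> x y z /forall_inP H1 /forall_inP H2; apply/forall_inP => g Gg.
    by rewrite (eqP (H1 g Gg)); apply: H2.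
  - move=> k y z Gk /forall_inP H; apply/forall_inP => g Gg.
    by rewrite -!permM; apply: H; rewrite groupM.
have : #|A| <= 1.
  rewrite -(cards1 (h b1)); apply: subset_leq_card; apply/subsetP => _ /imsetP[x _ ->].
  rewrite inE; have := all x b1; move/forall_inP/(_ 1%g (group1 G)).
  by rewrite !perm1.
by rewrite cA leqNgt r1.
Qed.
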